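(* Let $s\in\mathbb{C}$ with $\Re(s)>1$. Let $0<q<1$ and, for each integer $r\ge1$, let $\alpha_r(s,q)\in\mathbb{C}$ be given. Suppose that there exist a bounded function $\chi:\mathbb{N}\to\mathbb{C}$ and constants $C>0$ and $\sigma>\Re(s)$ such that for all $q\in(0,1)$ and all integers $r\ge1$: (i) $\displaystyle \lim_{q\to1^-}\alpha_r(s,q)=\frac{\chi(r)}{r^{\,s}}$; (ii) $\displaystyle |\alpha_r(s,q)|\le C\,r^{-\sigma}$. Define, for each integer $n\ge1$, \[ \beta_n(s,q)=\sum_{r=1}^{n}\frac{q^r\,\alpha_r(s,q)}{(q;q)_{n-r}\,(q;q)_{n+r}}, \qquad T_n(s,q):=\frac{\sqrt{n}\,(2n)!\,(1-q)^{2n}\,\beta_n(s,q)}{4^n}. \] Then the iterated limit exists and \[ \lim_{n\to\infty}\lim_{q\to1^-}T_n(s,q)=\frac{L(s,\chi)}{\sqrt{\pi}},\qquad L(s,\chi):=\sum_{r=1}^\infty\frac{\chi(r)}{r^{\,s}}. \]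
   Context: For $0<q<1$ and an integer $m\ge0$, $(q;q)_m=\prod_{j=1}^{m}(1-q^j)$ denotes the $q$-Pochhammer symbol, with $(q;q)_0=1$. The inner limit $q\to1^-$ is taken for fixed $n$, and the outer limit $n\to\infty$ is taken afterwards. *)

(* Defs.v *)
From Stdlib Require Export Reals Factorial.
From Coquelicot Require Export Coquelicot.
Open Scope R_scope.

Fixpoint qpoch (q : R) (m : nat) : R :=
  match m with
  | O => 1
  | S k => qpoch q k * (1 - q ^ (S k))
  end.

(* Complex power x^s := exp(s ln x) for a positive real base x. *)
Definition rcpow (x : R) (s : Coquelicot.Complex.C) : Coquelicot.Complex.C :=
  (exp (Re s * ln x) * cos (Im s * ln x), exp (Re s * ln x) * sin (Im s * ln x)).

Definition qbeta (alpha : nat -> R -> Coquelicot.Complex.C) (n : nat) (q : R)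
  : Coquelicot.Complex.C :=
  sum_n_m (fun r => Cmult (RtoC (q ^ r / (qpoch q (n - r) * qpoch q (n + r))))
                          (alpha r q)) 1 n.

Definition Tq (alpha : nat -> R -> Coquelicot.Complex.C) (n : nat) (q : R)
  : Coquelicot.Complex.C :=
  Cmult (RtoC (sqrt (INR n) * INR (Factorial.fact (2 * n)) * (1 - q) ^ (2 * n) / 4 ^ n))
        (qbeta alpha n q).

(* Main.v *)
Require Import Defs.
From Stdlib Require Import Reals Lra Lia Arith.
From Coquelicot Require Import Coquelicot.
Open Scope R_scope.
Local Notation CC := Coquelicot.Complex.C.

Lemma key_ineq (p m : R) : 1 < p -> 2 <= m ->
  (p-1) * Rpower m (-p) <= Rpower (m-1) (1-p) - Rpower m (1-p).
Proof.
  intros Hp Hm. unfold Rpower.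
  assert (Hl : ln (m-1) - ln m <= - / m).
  { rewrite <- ln_div by lra.
    rewrite <- (ln_exp (- / m)). apply ln_le.
    - apply Rdiv_lt_0_compat; lra.
    - eapply Rle_trans; [|apply exp_ineq1_le].
      right. field. lra. }
  assert (E1 : exp ((1-p) * ln (m-1)) = exp ((1-p) * ln m) * exp ((1-p) * (ln (m-1) - ln m))).
  { rewrite <- exp_plus. f_equal. ring. }
  assert (E2 : exp (-p * ln m) = exp ((1-p) * ln m) * / m).
  { replace (-p * ln m) with ((1-p) * ln m + - ln m) by ring.
    rewrite exp_plus, exp_Ropp, exp_ln by lra. reflexivity. }
  rewrite E1, E2.
  assert (H3 : 1 + (p-1) / m <= exp ((1-p) * (ln (m-1) - ln m))).
  { eapply Rle_trans; [|apply exp_ineq1_le].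
    apply Rplus_le_compat_l.
    replace ((p-1)/m) with ((1-p) * (- / m)) by (field; lra).
    apply Rmult_le_compat_neg_l; lra. }
  assert (H4 : 0 < exp ((1-p) * ln m)) by apply exp_pos.
  replace ((p - 1) * (exp ((1 - p) * ln m) * / m)) with (exp ((1 - p) * ln m) * ((p-1)/m)) by (field; lra).
  nra.
Qed.

Lemma Rpower_1_base (x : R) : Rpower 1 x = 1.
Proof. unfold Rpower. rewrite ln_1, Rmult_0_r, exp_0. reflexivity. Qed.

Lemma pseries (p : R) : 1 < p -> ex_series (fun k => Rpower (INR (S k)) (-p)).
Proof.
  intros Hp.
  set (t := fun k => Rpower (INR (S k)) (-p)).
  assert (Ht : forall k, 0 < t k) by (intros; unfold t, Rpower; apply exp_pos).
  assert (Hb : forall n, sum_n t n <= 1 + (1 - Rpower (INR (S n)) (1-p)) / (p-1)).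
  { induction n.
    - rewrite sum_O. unfold t. rewrite !S_INR, !Rplus_0_l, !Rpower_1_base.
      right; field; lra.
    - rewrite sum_Sn. unfold plus; cbn -[INR Rpower t].
      assert (K := key_ineq p (INR (S (S n))) Hp).
      replace (INR (S (S n)) - 1) with (INR (S n)) in K by (rewrite (S_INR (S n)); ring).
      assert (2 <= INR (S (S n))) by (rewrite !S_INR; pose proof (pos_INR n); lra).
      specialize (K H).
      unfold t at 2.
      apply Rmult_le_compat_l with (r := / (p-1)) in K;
        [|apply Rlt_le, Rinv_0_lt_compat; lra].
      replace (/ (p - 1) * ((p - 1) * Rpower (INR (S (S n))) (- p))) with
        (Rpower (INR (S (S n))) (- p)) in K by (field; lra).
      eapply Rle_trans. apply Rplus_le_compat. exact IHn. exact K.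
      right. field. lra. }
  assert (Hub : forall n, sum_n t n <= 1 + 1 / (p-1)).
  { intros n. eapply Rle_trans. apply Hb.
    assert (0 < Rpower (INR (S n)) (1-p)) by (unfold Rpower; apply exp_pos).
    apply Rplus_le_compat_l. unfold Rdiv. apply Rmult_le_compat_r.
    apply Rlt_le, Rinv_0_lt_compat; lra. lra. }
  destruct (growing_cv (sum_n t)) as [l Hl].
  - intros n. rewrite sum_Sn. unfold plus; cbn -[INR Rpower t]. specialize (Ht (S n)). lra.
  - exists (1 + 1/(p-1)). intros x [i ->]. apply Hub.
  - exists l. apply is_lim_seq_Reals in Hl. exact Hl.
Qed.


Definition Iw (n : nat) : R := RInt (fun x => sin x ^ n) 0 (PI/2).

Lemma cont_sinpow n x : continuous (fun x => sin x ^ n) x.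
Proof. apply (@ex_derive_continuous R_AbsRing R_NormedModule). auto_derive. auto. Qed.

Lemma ex_Iw n : ex_RInt (fun x => sin x ^ n) 0 (PI/2).
Proof. apply (@ex_RInt_continuous R_CompleteNormedModule). intros; apply cont_sinpow. Qed.

Lemma Iw_rec n : INR (n+2) * Iw (n+2) = INR (n+1) * Iw n.
Proof.
  set (df := fun x => INR (n+2) * sin x ^ (n+2) - INR (n+1) * sin x ^ n).
  assert (H : is_RInt df 0 (PI/2) 0).
  { set (f := fun x => - (sin x ^ (S n) * cos x)).
    assert (E : minus (f (PI/2)) (f 0) = 0).
    { unfold f. rewrite sin_PI2, cos_PI2, sin_0, cos_0. unfold minus, plus, opp; simpl. ring. }
    cut (is_RInt df 0 (PI/2) (minus (f (PI/2)) (f 0))). { rewrite E; auto. }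
    apply (@is_RInt_derive R_CompleteNormedModule).
    - intros x _. unfold df, f. auto_derive. auto.
      replace (match n with 0%nat => 1 | S _ => INR n + 1 end) with (INR n + 1) by (destruct n; simpl; ring).
      assert (Hc : cos x * cos x = 1 - sin x * sin x).
      { pose proof (sin2_cos2 x) as Hsc. unfold Rsqr in Hsc. lra. }
      transitivity (-( (INR n + 1) * sin x ^ n * (cos x * cos x)) + sin x * sin x * sin x ^ n).
      ring. rewrite Hc, pow_add, !plus_INR; simpl; ring.
    - intros x _. unfold df. apply (@ex_derive_continuous R_AbsRing R_NormedModule). auto_derive. auto. }
  assert (H2 : is_RInt df 0 (PI/2) (INR (n+2) * Iw (n+2) - INR (n+1) * Iw n)).
  { apply (@is_RInt_minus R_NormedModule); apply (@is_RInt_scal R_NormedModule);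
      apply (@RInt_correct R_CompleteNormedModule); apply ex_Iw. }
  assert (U1 := is_RInt_unique _ _ _ _ H). assert (U2 := is_RInt_unique _ _ _ _ H2).
  rewrite U1 in U2. lra.
Qed.

Lemma Iw_0 : Iw 0 = PI/2.
Proof.
  unfold Iw. change (RInt (fun _ => 1) 0 (PI/2) = PI/2).
  rewrite RInt_const. unfold scal; simpl. unfold mult; simpl. ring.
Qed.

Lemma Iw_1 : Iw 1 = 1.
Proof.
  unfold Iw.
  assert (H : is_RInt (fun x => sin x ^ 1) 0 (PI/2) (minus ((fun x => - cos x) (PI/2)) ((fun x => - cos x) 0))).
  { apply (@is_RInt_derive R_CompleteNormedModule (fun x => - cos x)).
    - intros x _. auto_derive. auto. ring.
    - intros x _. apply cont_sinpow. }
  rewrite (is_RInt_unique _ _ _ _ H). rewrite cos_PI2, cos_0.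
  unfold minus, plus, opp; simpl. ring.
Qed.

Lemma Iw_decr n : Iw (S n) <= Iw n.
Proof.
  unfold Iw. apply RInt_le.
  - pose proof PI_RGT_0. lra.
  - apply ex_Iw.
  - apply ex_Iw.
  - intros x Hx. pose proof PI_RGT_0.
    assert (0 <= sin x) by (apply sin_ge_0; lra).
    assert (sin x <= 1) by apply (proj2 (SIN_bound x)).
    assert (0 <= sin x ^ n) by (apply pow_le; lra).
    simpl. nra.
Qed.

Definition cw (n : nat) : R := INR (fact (2*n)) / (4^n * (INR (fact n))^2).

Lemma cw_pos n : 0 < cw n.
Proof.
  unfold cw. pose proof (INR_fact_lt_0 (2*n)). pose proof (INR_fact_lt_0 n).
  apply Rdiv_lt_0_compat; auto. apply Rmult_lt_0_compat. apply pow_lt; lra. apply pow_lt; lra.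
Qed.

Lemma cw_S n : cw (S n) = cw n * (2 * INR n + 1) / (2 * INR n + 2).
Proof.
  unfold cw. replace (2 * S n)%nat with (S (S (2*n))) by lia.
  rewrite !fact_simpl. rewrite !mult_INR, !S_INR, mult_INR.
  pose proof (INR_fact_lt_0 (2*n)). pose proof (INR_fact_lt_0 n). pose proof (pos_INR n).
  simpl. field. repeat split; try lra. apply pow_nonzero; lra.
Qed.

Lemma Iw_closed n : Iw (2*n) = PI/2 * cw n /\ Iw (2*n+1) = 1 / ((2 * INR n + 1) * cw n).
Proof.
  induction n as [|n [IH1 IH2]].
  - simpl. rewrite Iw_0, Iw_1. unfold cw. simpl. split; field.
  - pose proof (cw_pos n). pose proof (pos_INR n).
    pose proof (Iw_rec (2*n)) as R1. pose proof (Iw_rec (2*n+1)) as R2.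
    split.
    + replace (2 * S n)%nat with (2*n+2)%nat by lia.
      apply Rmult_eq_reg_l with (INR (2*n+2)); [| apply not_0_INR; lia].
      rewrite R1, IH1, cw_S. rewrite !plus_INR, !mult_INR. simpl. field. lra.
    + replace (2 * S n + 1)%nat with (2*n+1+2)%nat by lia.
      apply Rmult_eq_reg_l with (INR (2*n+1+2)); [| apply not_0_INR; lia].
      rewrite R2, IH2, cw_S. rewrite !plus_INR, !mult_INR, !S_INR. simpl. field. lra.
Qed.

Lemma h_le_div a b : 0 < a -> 1 <= a * b -> 1/a <= b.
Proof. intros Ha H. replace b with (1/a * (a*b)) by (field; lra).
  rewrite <- (Rmult_1_r (1/a)) at 1. apply Rmult_le_compat_l; auto.
  apply Rlt_le, Rdiv_lt_0_compat; lra. Qed.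
Lemma h_div_le a b : 0 < a -> 1/a <= b -> 1 <= a * b.
Proof. intros Ha H. replace 1 with (a * (1/a)) by (field; lra).
  apply Rmult_le_compat_l; lra. Qed.
Lemma h_le_div' a b : 0 < a -> a * b <= 1 -> b <= 1/a.
Proof. intros Ha H. replace b with (1/a * (a*b)) by (field; lra).
  rewrite <- (Rmult_1_r (1/a)) at 2. apply Rmult_le_compat_l; auto.
  apply Rlt_le, Rdiv_lt_0_compat; lra. Qed.
Lemma h_div_le' a b : 0 < a -> b <= 1/a -> a * b <= 1.
Proof. intros Ha H. replace 1 with (a * (1/a)) by (field; lra).
  apply Rmult_le_compat_l; lra. Qed.

Lemma wallis_bounds m :
  2 / (PI * (2 * INR m + 3)) <= cw (S m) ^ 2 <= 1 / (PI * (INR m + 1)).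
Proof.
  pose proof (cw_pos m) as Hc0. pose proof (cw_pos (S m)) as Hc. pose proof (pos_INR m).
  pose proof PI_RGT_0.
  assert (A := Iw_decr (2 * S m)).
  assert (B := Iw_decr (2 * m + 1)).
  replace (S (2 * S m)) with (2 * S m + 1)%nat in A by lia.
  replace (S (2 * m + 1)) with (2 * S m)%nat in B by lia.
  rewrite (proj1 (Iw_closed (S m))), (proj2 (Iw_closed (S m))) in A.
  rewrite (proj1 (Iw_closed (S m))), (proj2 (Iw_closed m)) in B.
  rewrite S_INR in A.
  split.
  - apply h_div_le in A; [|apply Rmult_lt_0_compat; lra].
    replace (2 / (PI * (2 * INR m + 3))) with (1 / (PI * (2 * INR m + 3) / 2)) by (field; lra).
    apply h_le_div. apply Rdiv_lt_0_compat; [apply Rmult_lt_0_compat|]; lra.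
    replace (PI * (2 * INR m + 3) / 2 * cw (S m) ^ 2) with
      ((2 * (INR m + 1) + 1) * cw (S m) * (PI / 2 * cw (S m))) by field. exact A.
  - replace ((2 * INR m + 1) * cw m) with ((2 * INR m + 2) * cw (S m)) in B
      by (rewrite cw_S; field; lra).
    apply h_div_le' in B; [|apply Rmult_lt_0_compat; lra].
    apply h_le_div'. apply Rmult_lt_0_compat; lra.
    replace (PI * (INR m + 1) * cw (S m) ^ 2) with
      ((2 * INR m + 2) * cw (S m) * (PI / 2 * cw (S m))) by field. exact B.
Qed.

Lemma inv_n_lim : is_lim_seq (fun n => / INR n) 0.
Proof.
  assert (H := is_lim_seq_inv INR p_infty is_lim_seq_INR).
  simpl in H. apply H. discriminate.
Qed.

Lemma inv_S_lim : is_lim_seq (fun m => / INR (S m)) 0.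
Proof. apply (is_lim_seq_incr_1 (fun n => / INR n)). apply inv_n_lim. Qed.

Lemma wallis : is_lim_seq (fun n => sqrt (INR n) * cw n) (/ sqrt PI).
Proof.
  pose proof PI_RGT_0.
  apply is_lim_seq_incr_1.
  set (v := fun m => INR (S m) * cw (S m) ^ 2).
  assert (Hv : is_lim_seq v (/ PI)).
  { apply is_lim_seq_le_le with (u := fun m => (1 - / INR (S m)) / PI) (w := fun _ => / PI).
    - intros m. destruct (wallis_bounds m) as [B1 B2]. pose proof (pos_INR m).
      unfold v. rewrite S_INR. split.
      + apply Rle_trans with ((INR m + 1) * (2 / (PI * (2 * INR m + 3)))).
        * apply Rge_le, Rminus_ge.
          replace ((INR m + 1) * (2 / (PI * (2 * INR m + 3))) - (1 - / (INR m + 1)) / PI)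
            with ((INR m + 2) / (PI * (2 * INR m + 3) * (INR m + 1))) by (field; lra).
          apply Rle_ge, Rlt_le, Rdiv_lt_0_compat. lra.
          apply Rmult_lt_0_compat; [apply Rmult_lt_0_compat|]; lra.
        * apply Rmult_le_compat_l; lra.
      + apply Rle_trans with ((INR m + 1) * (1 / (PI * (INR m + 1)))).
        * apply Rmult_le_compat_l; lra.
        * right. field. lra.
    - replace (/ PI) with ((1 - 0) / PI) at 1 by (field; lra).
      apply is_lim_seq_div'. apply is_lim_seq_minus'. apply is_lim_seq_const.
      apply inv_S_lim. apply is_lim_seq_const. lra.
    - apply is_lim_seq_const. }
  apply is_lim_seq_ext with (u := fun m => sqrt (v m)).
  { intros m. unfold v. rewrite sqrt_mult. f_equal. rewrite <- Rsqr_pow2.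
    apply sqrt_Rsqr. apply Rlt_le, cw_pos. apply pos_INR. apply pow2_ge_0. }
  rewrite <- sqrt_inv.
  assert (Hs : filterlim sqrt (locally (/ PI)) (locally (sqrt (/ PI)))).
  { apply continuity_pt_filterlim. apply continuity_pt_sqrt.
    apply Rlt_le, Rinv_0_lt_compat; lra. }
  exact (filterlim_comp _ _ _ v sqrt eventually (locally (/ PI)) _ Hv Hs).
Qed.

Definition Wt (n r : nat) : R :=
  sqrt (INR n) * INR (fact (2*n)) / 4^n * (1 / (INR (fact (n-r)) * INR (fact (n+r)))).

Lemma Wt_0 n : Wt n 0 = sqrt (INR n) * cw n.
Proof.
  unfold Wt, cw. rewrite Nat.sub_0_r, Nat.add_0_r.
  pose proof (INR_fact_lt_0 n). field. split. lra. apply pow_nonzero; lra.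
Qed.

Lemma Wt_S n r : (r < n)%nat -> Wt n (S r) = Wt n r * ((INR n - INR r) / (INR n + INR r + 1)).
Proof.
  intros Hr. unfold Wt.
  replace (n - r)%nat with (S (n - S r)) by lia.
  replace (n + S r)%nat with (S (n + r)) by lia.
  rewrite !fact_simpl, !mult_INR.
  replace (INR (S (n - S r))) with (INR n - INR r) by (rewrite S_INR, minus_INR, S_INR by lia; ring).
  rewrite S_INR, plus_INR.
  pose proof (INR_fact_lt_0 (n - S r)). pose proof (INR_fact_lt_0 (n + r)).
  pose proof (pos_INR r). assert (INR r < INR n) by (apply lt_INR; lia).
  field. repeat split; try lra. apply pow_nonzero; lra.
Qed.

Lemma Wt_nonneg n r : 0 <= Wt n r.
Proof.
  unfold Wt. pose proof (INR_fact_lt_0 (2*n)). pose proof (INR_fact_lt_0 (n-r)).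
  pose proof (INR_fact_lt_0 (n+r)). pose proof (sqrt_pos (INR n)).
  assert (0 < 4^n) by (apply pow_lt; lra).
  apply Rmult_le_pos. unfold Rdiv. apply Rmult_le_pos. apply Rmult_le_pos; lra.
  apply Rlt_le, Rinv_0_lt_compat; lra.
  apply Rlt_le, Rdiv_lt_0_compat. lra. apply Rmult_lt_0_compat; lra.
Qed.

Lemma Wt_le n r : (r <= n)%nat -> Wt n r <= Wt n 0.
Proof.
  induction r; intros Hr. lra.
  rewrite Wt_S by lia. pose proof (Wt_nonneg n r). pose proof (pos_INR r).
  assert (INR r < INR n) by (apply lt_INR; lia).
  assert ((INR n - INR r) / (INR n + INR r + 1) <= 1).
  { apply h_le_div' with (a := 1) in IHr || idtac.
    replace 1 with (1/1) by field. unfold Rdiv at 1.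
    apply Rle_trans with ((INR n - INR r) * / (INR n - INR r)).
    apply Rmult_le_compat_l. lra. apply Rinv_le_contravar; lra.
    right. field. lra. }
  assert (0 <= (INR n - INR r) / (INR n + INR r + 1)).
  { apply Rlt_le, Rdiv_lt_0_compat; lra. }
  specialize (IHr ltac:(lia)). nra.
Qed.

Lemma Wt0_le n : Wt n 0 <= / sqrt PI.
Proof.
  rewrite Wt_0. pose proof PI_RGT_0. destruct n.
  - simpl. rewrite sqrt_0. rewrite Rmult_0_l. apply Rlt_le, Rinv_0_lt_compat, sqrt_lt_R0; lra.
  - destruct (wallis_bounds n) as [_ B2]. pose proof (cw_pos (S n)). pose proof (pos_INR n).
    rewrite <- sqrt_inv.
    replace (sqrt (INR (S n)) * cw (S n)) with (sqrt (INR (S n) * cw (S n) ^ 2)).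
    + apply sqrt_le_1_alt. rewrite S_INR.
      apply Rle_trans with ((INR n + 1) * (1 / (PI * (INR n + 1)))).
      apply Rmult_le_compat_l; lra. right. field. lra.
    + rewrite sqrt_mult. f_equal. rewrite <- Rsqr_pow2. apply sqrt_Rsqr. lra.
      apply pos_INR. apply pow2_ge_0.
Qed.

Lemma ratio_lim r : is_lim_seq (fun n => (INR n - INR r) / (INR n + INR r + 1)) 1.
Proof.
  apply is_lim_seq_ext_loc with (u := fun n => (1 - INR r * / INR n) / (1 + (INR r + 1) * / INR n)).
  - exists 1%nat. intros n Hn. assert (0 < INR n) by (apply lt_0_INR; lia).
    pose proof (pos_INR r). field. lra.
  - pose proof (pos_INR r).
    cut (is_lim_seq (fun n => (1 - INR r * / INR n) / (1 + (INR r + 1) * / INR n))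
           ((1 - INR r * 0) / (1 + (INR r + 1) * 0))).
    { intros HH. replace ((1 - INR r * 0) / (1 + (INR r + 1) * 0)) with 1 in HH by field. exact HH. }
    apply is_lim_seq_div'.
    + apply is_lim_seq_minus'. apply is_lim_seq_const.
      apply is_lim_seq_mult'. apply is_lim_seq_const. apply inv_n_lim.
    + apply is_lim_seq_plus'. apply is_lim_seq_const.
      apply is_lim_seq_mult'. apply is_lim_seq_const. apply inv_n_lim.
    + lra.
Qed.

Lemma Wt_lim r : is_lim_seq (fun n => Wt n r) (/ sqrt PI).
Proof.
  induction r.
  - apply is_lim_seq_ext with (u := fun n => sqrt (INR n) * cw n).
    intros; symmetry; apply Wt_0. apply wallis.
  - apply is_lim_seq_ext_loc with (u := fun n => Wt n r * ((INR n - INR r) / (INR n + INR r + 1))).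
    + exists (S r). intros n Hn. symmetry. apply Wt_S. lia.
    + replace (/ sqrt PI) with (/ sqrt PI * 1) by ring.
      apply is_lim_seq_mult'. exact IHr. apply ratio_lim.
Qed.


Lemma lim_C_of_eps {T} (F : (T -> Prop) -> Prop) {FF : Filter F} (f : T -> CC) (y : CC) :
  (forall eps : R, 0 < eps -> F (fun q => Cmod (Cminus (f q) y) < eps)) ->
  filterlim f F (locally y).
Proof.
  intros H. apply filterlim_locally. intros eps.
  apply filter_imp with (2 := H eps (cond_pos eps)).
  intros q Hq. apply C_NormedModule_mixin_compat1. exact Hq.
Qed.

Lemma eps_of_lim_C {T} (F : (T -> Prop) -> Prop) {FF : Filter F} (f : T -> CC) (y : CC) :
  filterlim f F (locally y) ->
  (forall eps : R, 0 < eps -> F (fun q => Cmod (Cminus (f q) y) < eps)).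
Proof.
  intros H eps Heps.
  apply (proj1 (@filterlim_locally_ball_norm C_AbsRing T C_NormedModule F FF f y)) with (eps := mkposreal eps Heps) in H.
  exact H.
Qed.

Lemma lim_RtoC {T} (F : (T -> Prop) -> Prop) {FF : Filter F} (f : T -> R) (x : R) :
  filterlim f F (locally x) -> filterlim (fun q => RtoC (f q)) F (locally (RtoC x)).
Proof.
  intros H. apply filterlim_locally. intros eps.
  apply (proj1 (filterlim_locally f x)) with (eps := eps) in H.
  apply filter_imp with (2 := H). intros q Hq. split. exact Hq. apply ball_center.
Qed.

Lemma lim_C_abs {T} (F : (T -> Prop) -> Prop) {FF : Filter F} (f : T -> CC) (x : CC) :
  filterlim f F (locally x) -> filterlim f F (@locally (AbsRing_UniformSpace C_AbsRing) x).
Proof.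
  intros H. apply (@filterlim_locally T (AbsRing_UniformSpace C_AbsRing) F FF). intros eps.
  apply filter_imp with (2 := eps_of_lim_C F f x H eps (cond_pos eps)).
  intros q Hq. exact Hq.
Qed.

Lemma lim_Cmult {T} (F : (T -> Prop) -> Prop) {FF : Filter F} (f g : T -> CC) (x y : CC) :
  filterlim f F (locally x) -> filterlim g F (locally y) ->
  filterlim (fun q => Cmult (f q) (g q)) F (locally (Cmult x y)).
Proof.
  intros Hf Hg. apply lim_C_abs in Hf.
  exact (@filterlim_comp_2 _ _ _ _ F _ (locally y) (locally (Cmult x y)) FF f g (fun a b => @scal C_AbsRing C_NormedModule a b) Hf Hg
    (@filterlim_scal C_AbsRing C_NormedModule x y)).
exact FF. Qed.

Lemma lim_sum {T} (F : (T -> Prop) -> Prop) {FF : Filter F} (f : nat -> T -> CC) (g : nat -> CC) (a b : nat) :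
  (forall r, (a <= r <= b)%nat -> filterlim (f r) F (locally (g r))) ->
  filterlim (fun q => sum_n_m (fun r => f r q) a b) F (locally (sum_n_m g a b)).
Proof.
  induction b; intros H.
  - destruct a.
    + rewrite sum_n_n. apply filterlim_ext with (f := f 0%nat).
      intros; rewrite sum_n_n; reflexivity. apply H; lia.
    + rewrite sum_n_m_zero by lia.
      apply filterlim_ext with (f := fun _ => (@zero C_AbelianGroup)).
      intros; rewrite sum_n_m_zero by lia; reflexivity. apply filterlim_const.
  - destruct (le_lt_dec a (S b)) as [Hab|Hab].
    + rewrite sum_n_Sm by lia.
      apply filterlim_ext with (f := fun q => plus (sum_n_m (fun r => f r q) a b) (f (S b) q)).
      intros; rewrite sum_n_Sm by lia; reflexivity.
      apply (@filterlim_comp_2 _ _ _ _ F (locally (sum_n_m g a b)) (locally (g (S b))) _ FF _ _ plus).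
      apply IHb. intros; apply H; lia. apply H; lia.
      apply (@filterlim_plus C_AbsRing C_NormedModule).
    + rewrite sum_n_m_zero by lia.
      apply filterlim_ext with (f := fun _ => (@zero C_AbelianGroup)).
      intros; rewrite sum_n_m_zero by lia; reflexivity. apply filterlim_const.
Qed.

Lemma sum_n_m_le_loc (a b : nat -> R) (n m : nat) :
  (forall k, (n <= k <= m)%nat -> a k <= b k) -> sum_n_m a n m <= sum_n_m b n m.
Proof.
  induction m; intros H.
  - destruct n. rewrite !sum_n_n. apply H; lia.
    rewrite !sum_n_m_zero by lia. lra.
  - destruct (le_lt_dec n (S m)).
    + rewrite !sum_n_Sm by lia. apply Rplus_le_compat. apply IHm. intros; apply H; lia. apply H; lia.
    + rewrite !sum_n_m_zero by lia. lra.
Qed.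

Lemma Cmult_RtoC_split (x c : R) (z : CC) :
  Cmult (RtoC x) z = Cplus (Cmult (RtoC (x - c)) z) (Cmult (RtoC c) z).
Proof. destruct z. unfold RtoC, Cmult, Cplus; simpl. f_equal; ring. Qed.

Lemma Cmod_RtoC_mult (x : R) (z : CC) : Cmod (Cmult (RtoC x) z) = Rabs x * Cmod z.
Proof. rewrite Cmod_mult, Cmod_R. reflexivity. Qed.

Lemma tannery (v : nat -> nat -> R) (b : nat -> CC) (c B : R) (L : CC) :
  ex_series (fun k => Cmod (b k)) -> is_series b L ->
  (forall k, is_lim_seq (fun n => v n k) c) ->
  (forall n k, (k <= n)%nat -> Rabs (v n k) <= B) ->
  filterlim (fun n => sum_n (fun k => Cmult (RtoC (v n k)) (b k)) n) eventually
    (locally (Cmult (RtoC c) L)).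
Proof.
  intros Hab HL Hv HB.
  apply (lim_C_of_eps eventually). intros eps Heps.
  set (K := 1 + Rabs B + Rabs c).
  assert (HK : 0 < K) by (unfold K; pose proof (Rabs_pos B); pose proof (Rabs_pos c); lra).
  set (d := eps / K).
  assert (Hd : 0 < d) by (unfold d; apply Rdiv_lt_0_compat; lra).
  assert (HC := @Cauchy_ex_series R_AbsRing R_CompleteNormedModule (fun k => Cmod (b k)) Hab). destruct (HC (mkposreal d Hd)) as [N1 HN1].
  destruct (eps_of_lim_C eventually (sum_n b) L HL d Hd) as [N2 HN2].
  set (N := max N1 N2).
  set (D := fun n => sum_n_m (fun k => Cmult (RtoC (v n k - c)) (b k)) 0 N).
  assert (HD : filterlim D eventually (locally (sum_n_m (fun k => Cmult (RtoC (c - c)) (b k)) 0 N))).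
  { unfold D. apply (lim_sum eventually (fun k n => Cmult (RtoC (v n k - c)) (b k))).
    intros r _. apply (lim_Cmult eventually (fun n => RtoC (v n r - c)) (fun _ => b r)).
    apply (lim_RtoC eventually (fun n => v n r - c)).
    apply (is_lim_seq_minus' _ _ c c (Hv r) (is_lim_seq_const c)).
    apply filterlim_const. }
  assert (E0 : sum_n_m (fun k => Cmult (RtoC (c - c)) (b k)) 0 N = RtoC 0).
  { transitivity (sum_n_m (fun _ => @zero C_AbelianMonoid) 0 N).
    2:{ exact (sum_n_m_const_zero (G:=C_AbelianMonoid) 0 N). }
    apply sum_n_m_ext. intros k. replace (c - c) with 0 by ring. destruct (b k). unfold RtoC, Cmult; simpl.
    change (@zero C_AbelianMonoid) with (RtoC 0). unfold RtoC. f_equal; ring. }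
  rewrite E0 in HD.
  destruct (eps_of_lim_C eventually D _ HD d Hd) as [N3 HN3].
  exists (max N N3). intros n Hn.
  assert (HnN : (N <= n)%nat) by lia.
  specialize (HN3 n ltac:(lia)).
  specialize (HN2 N ltac:(unfold N; lia)).
  set (M := sum_n_m (fun k => Cmult (RtoC (v n k)) (b k)) (S N) n).
  assert (Esplit : sum_n (fun k => Cmult (RtoC (v n k)) (b k)) n =
     Cplus (Cplus (D n) (Cmult (RtoC c) (sum_n b N))) M).
  { assert (A : sum_n_m (fun k => Cmult (RtoC (v n k)) (b k)) 0 N = Cplus (D n) (Cmult (RtoC c) (sum_n b N))).
    { transitivity (sum_n_m (fun k => @plus C_AbelianMonoid (Cmult (RtoC (v n k - c)) (b k)) (@mult C_Ring (RtoC c) (b k))) 0 N).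
      apply sum_n_m_ext. intros k. apply Cmult_RtoC_split.
      rewrite sum_n_m_plus, (sum_n_m_mult_l (K := C_Ring)). reflexivity. }
    unfold sum_n. rewrite (sum_n_m_Chasles _ 0 N n) by lia. rewrite A. reflexivity. }
  rewrite Esplit.
  assert (HM : Cmod M <= Rabs B * d).
  { unfold M. eapply Rle_trans. apply (@norm_sum_n_m C_AbsRing C_NormedModule).
    eapply Rle_trans. apply sum_n_m_le_loc with (b := fun k => Rabs B * Cmod (b k)).
    { intros k Hk. change (norm (Cmult (RtoC (v n k)) (b k))) with (Cmod (Cmult (RtoC (v n k)) (b k))).
      rewrite Cmod_RtoC_mult. apply Rmult_le_compat_r. apply Cmod_ge_0.
      eapply Rle_trans. apply HB. lia. apply Rle_abs. }
    rewrite (sum_n_m_mult_l (K := R_Ring)). apply Rmult_le_compat_l. apply Rabs_pos.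
    specialize (HN1 (S N) n ltac:(unfold N; lia) ltac:(unfold N; lia)).
    simpl in HN1. change (norm (sum_n_m (fun k => Cmod (b k)) (S N) n)) with
      (Rabs (sum_n_m (fun k => Cmod (b k)) (S N) n)) in HN1.
    apply Rlt_le. eapply Rle_lt_trans. apply Rle_abs. exact HN1. }
  replace (Cminus (Cplus (Cplus (D n) (Cmult (RtoC c) (sum_n b N))) M) (Cmult (RtoC c) L))
    with (Cplus (Cplus (Cminus (D n) (RtoC 0)) M) (Cmult (RtoC c) (Cminus (sum_n b N) L))) by ring.
  eapply Rle_lt_trans. apply Cmod_triangle.
  eapply Rle_lt_trans. apply Rplus_le_compat_r. apply Cmod_triangle.
  rewrite Cmod_RtoC_mult.
  assert (Rabs c * Cmod (Cminus (sum_n b N) L) <= Rabs c * d).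
  { apply Rmult_le_compat_l. apply Rabs_pos. apply Rlt_le. exact HN2. }
  assert (eps = d * K) by (unfold d; field; lra).
  unfold K in *. lra.
Qed.


Fixpoint Gq (k : nat) (q : R) : R :=
  match k with O => 1 | S j => 1 + q * Gq j q end.
Fixpoint Pq (m : nat) (q : R) : R :=
  match m with O => 1 | S k => Pq k q * Gq k q end.

Lemma Gq_id k q : (1 - q) * Gq k q = 1 - q ^ (S k).
Proof. induction k; simpl in *. ring. replace ((1 - q) * (1 + q * Gq k q)) with (1 - q + q * ((1-q) * Gq k q)) by ring.
  rewrite IHk. simpl. ring. Qed.

Lemma qpoch_Pq m q : qpoch q m = Pq m q * (1 - q) ^ m.
Proof. induction m. simpl; ring. change (qpoch q (S m)) with (qpoch q m * (1 - q ^ S m)). rewrite IHm, <- (Gq_id m q). simpl. ring. Qed.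

Lemma Gq_1 k : Gq k 1 = INR (S k).
Proof. induction k; simpl Gq. simpl; ring. rewrite IHk, (S_INR (S k)). ring. Qed.

Lemma Pq_1 m : Pq m 1 = INR (fact m).
Proof. induction m; simpl Pq. reflexivity. rewrite IHm, Gq_1, fact_simpl, mult_INR. ring. Qed.

Lemma Gq_pos k q : 0 <= q -> 1 <= Gq k q.
Proof. intros Hq. induction k; simpl. lra. nra. Qed.

Lemma Pq_pos m q : 0 <= q -> 0 < Pq m q.
Proof. intros Hq. induction m; simpl. lra. pose proof (Gq_pos m q Hq). nra. Qed.

Lemma Gq_der k q : ex_derive (Gq k) q.
Proof. induction k; simpl. apply ex_derive_const.
  apply (ex_derive_plus (fun _ => 1) (fun q => q * Gq k q)). apply ex_derive_const.
  apply (ex_derive_mult (fun q => q) (Gq k)). apply ex_derive_id. exact IHk. Qed.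

Lemma Pq_der m q : ex_derive (Pq m) q.
Proof. induction m; simpl. apply ex_derive_const.
  apply (ex_derive_mult (Pq m) (Gq m)). exact IHm. apply Gq_der. Qed.

Lemma h_cont (K : R) (n r : nat) : continuous (fun q => K * (q ^ r / (Pq (n - r) q * Pq (n + r) q))) 1.
Proof.
  apply (@ex_derive_continuous R_AbsRing R_NormedModule). auto_derive.
  split. apply Pq_der. split. apply Pq_der. split; auto.
  rewrite !Pq_1. pose proof (INR_fact_lt_0 (n-r)). pose proof (INR_fact_lt_0 (n+r)). nra.
Qed.

Lemma at_left_le (f : R -> R) x l : filterlim f (locally x) (locally l) -> filterlim f (at_left x) (locally l).
Proof.
  intros H P HP. specialize (H P HP). unfold filtermap in *. unfold at_left, within.
  apply filter_imp with (2 := H). auto.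
Qed.

Lemma Cmod_rcpow x s : Cmod (rcpow x s) = exp (Re s * ln x).
Proof.
  unfold rcpow, Cmod; cbn [fst snd].
  set (e := exp (Re s * ln x)). set (t := Im s * ln x).
  assert (Ht : sin t ^ 2 + cos t ^ 2 = 1) by (rewrite <- !Rsqr_pow2; apply sin2_cos2).
  replace ((e * cos t) ^ 2 + (e * sin t) ^ 2) with (e ^ 2 * (sin t ^ 2 + cos t ^ 2)) by ring.
  rewrite Ht, Rmult_1_r. apply sqrt_pow2. unfold e. apply Rlt_le, exp_pos.
Qed.

Lemma shift_lim (l : nat -> CC) (T : CC) :
  filterlim (fun m => l (S m)) eventually (locally T) -> filterlim l eventually (locally T).
Proof.
  intros H P HP. destruct (H P HP) as [N HN]. exists (S N). intros n Hn.
  destruct n. lia. apply HN. lia.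
Qed.

Theorem mainTheorem1 (s : Coquelicot.Complex.C) (hs : 1 < Re s)
  (alpha : nat -> R -> Coquelicot.Complex.C)
  (chi : nat -> Coquelicot.Complex.C) (Cst sigma : R)
  (hchi : exists M : R, forall r : nat, Cmod (chi r) <= M)
  (hC : 0 < Cst) (hsigma : Re s < sigma)
  (hlim : forall r : nat, (1 <= r)%nat ->
     filterlim (fun q => alpha r q) (at_left 1)
       (locally (Cdiv (chi r) (rcpow (INR r) s))))
  (hbound : forall (q : R) (r : nat), 0 < q < 1 -> (1 <= r)%nat ->
     Cmod (alpha r q) <= Cst * Rpower (INR r) (- sigma)) :
  exists L : Coquelicot.Complex.C,
    is_series (fun k => Cdiv (chi (S k)) (rcpow (INR (S k)) s)) L /\
    exists l : nat -> Coquelicot.Complex.C,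
      (forall n : nat, (1 <= n)%nat ->
         filterlim (fun q => Tq alpha n q) (at_left 1) (locally (l n))) /\
      filterlim l eventually (locally (Cdiv L (RtoC (sqrt PI)))).
Proof.
  destruct hchi as [M HM].
  set (a := fun r => Cdiv (chi r) (rcpow (INR r) s)).
  assert (Habs : ex_series (fun k => Cmod (a (S k)))).
  { apply (@ex_series_le R_AbsRing R_CompleteNormedModule) with (b := fun k => M * Rpower (INR (S k)) (- Re s)).
    - intros k. change (norm (Cmod (a (S k)))) with (Rabs (Cmod (a (S k)))).
      rewrite Rabs_pos_eq by apply Cmod_ge_0.
      assert (Hx : 0 < INR (S k)) by apply lt_0_INR, Nat.lt_0_succ.
      assert (Hr : 0 < Cmod (rcpow (INR (S k)) s)) by (rewrite Cmod_rcpow; apply exp_pos).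
      assert (Hr0 : rcpow (INR (S k)) s <> 0) by (apply Cmod_gt_0; exact Hr).
      unfold a. unfold Cdiv. rewrite Cmod_mult, Cmod_inv by exact Hr0.
      rewrite Cmod_rcpow. unfold Rpower. rewrite <- exp_Ropp.
      replace (- (Re s * ln (INR (S k)))) with (- Re s * ln (INR (S k))) by ring.
      apply Rmult_le_compat_r. apply Rlt_le, exp_pos. apply HM.
    - apply (@ex_series_scal_l R_AbsRing R_NormedModule M). apply pseries. exact hs. }
  assert (Hex : ex_series (fun k => a (S k))).
  { apply (@ex_series_le C_AbsRing C_CompleteNormedModule) with (b := fun k => Cmod (a (S k))).
    intros k. right. reflexivity. exact Habs. }
  destruct Hex as [L HL].
  exists L. split. exact HL.
  exists (fun n => sum_n_m (fun r => Cmult (RtoC (Wt n r)) (a r)) 1 n).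
  split.
  - intros n Hn.
    set (g := fun r q => sqrt (INR n) * INR (fact (2 * n)) * (1 - q) ^ (2 * n) / 4 ^ n *
                         (q ^ r / (qpoch q (n - r) * qpoch q (n + r)))).
    apply filterlim_ext with (f := fun q => sum_n_m (fun r => Cmult (RtoC (g r q)) (alpha r q)) 1 n).
    { intros q. unfold Tq, qbeta. rewrite <- (sum_n_m_mult_l (K := C_Ring)).
      apply sum_n_m_ext. intros r. unfold g. change (@mult C_Ring) with Cmult. rewrite Cmult_assoc, <- RtoC_mult. reflexivity. }
    apply (lim_sum (at_left 1) (fun r q => Cmult (RtoC (g r q)) (alpha r q))).
    intros r Hr.
    apply (lim_Cmult (at_left 1) (fun q => RtoC (g r q)) (alpha r)).
    2:{ apply hlim. lia. }
    apply (lim_RtoC (at_left 1) (g r)).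
    set (h := fun q => sqrt (INR n) * INR (fact (2 * n)) / 4 ^ n *
                       (q ^ r / (Pq (n - r) q * Pq (n + r) q))).
    apply filterlim_ext_loc with (f := h).
    { exists (mkposreal 1 Rlt_0_1). intros q Hq Hq1. simpl in Hq.
      unfold ball in Hq; simpl in Hq; unfold AbsRing_ball, abs, minus, plus, opp in Hq; simpl in Hq.
      assert (Hq0 : 0 < q) by (apply Rabs_def2 in Hq; lra).
      unfold h, g. rewrite !qpoch_Pq.
      replace (2 * n)%nat with ((n - r) + (n + r))%nat by lia. rewrite pow_add.
      pose proof (Pq_pos (n - r) q (Rlt_le _ _ Hq0)). pose proof (Pq_pos (n + r) q (Rlt_le _ _ Hq0)).
      assert (0 < (1 - q) ^ (n - r)) by (apply pow_lt; lra).
      assert (0 < (1 - q) ^ (n + r)) by (apply pow_lt; lra).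
      field. repeat split; try lra. apply pow_nonzero; lra. }
    replace (Wt n r) with (h 1).
    2:{ unfold h, Wt. rewrite !Pq_1, pow1. unfold Rdiv. ring. }
    apply at_left_le. unfold h. apply h_cont.
  - apply shift_lim.
    assert (HT := tannery (fun m k => Wt (S m) (S k)) (fun k => a (S k)) (/ sqrt PI) (/ sqrt PI) L Habs HL).
    replace (Cdiv L (RtoC (sqrt PI))) with (Cmult (RtoC (/ sqrt PI)) L).
    2:{ pose proof PI_RGT_0. assert (0 < sqrt PI) by (apply sqrt_lt_R0; lra).
        unfold Cdiv. rewrite RtoC_inv by lra. apply Cmult_comm. }
    apply filterlim_ext with (f := fun m => sum_n (fun k => Cmult (RtoC (Wt (S m) (S k))) (a (S k))) m).
    { intros m. unfold sum_n. apply (sum_n_m_S (fun r => Cmult (RtoC (Wt (S m) r)) (a r)) 0 m). }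
    apply HT.
    + intros k. apply (is_lim_seq_incr_1 (fun n => Wt n (S k))). apply Wt_lim.
    + intros m k Hk. rewrite Rabs_pos_eq by apply Wt_nonneg.
      eapply Rle_trans. apply Wt_le. lia. apply Wt0_le.
Qed.
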